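(* For a quasi-pseudometric space $(X,d)$ the following are equivalent, where for a function $\varphi:X\to\mathbb{R}\cup\{\infty\}$ and $x\in X$ we write $S(x)=\{y\in X:\varphi(y)+d(y,x)\le\varphi(x)\}$: 1. $(X,d)$ is sequentially right $K$-complete. 2. For every proper bounded below nearly lower semicontinuous function $\varphi:X\to\mathbb{R}\cup\{\infty\}$ there exists $z\in X$ such that $\varphi(x)=\varphi(z)$ for all $x\in S(z)$. 3. Every proper bounded below nearly lower semicontinuous function $\varphi:X\to\mathbb{R}\cup\{\infty\}$ such that for every $x\in X$ with $\varphi(x)>\inf\varphi(X)$ there exists $y\in S(x)$ with $\varphi(y)<\varphi(x)$, attains its minimum on $X$. 4. For every proper bounded below nearly lower semicontinuous function $\varphi:X\to\mathbb{R}\cup\{\infty\}$ and every mapping $T:X\to X$ with $Tx\in S(x)$ for all $x\in X$, there exists $z\in X$ with $\varphi(Tz)=\varphi(z)$.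
   Context: A quasi-pseudometric on $X$ is $d:X\times X\to[0,\infty)$ with $d(x,x)=0$ and $d(x,z)\le d(x,y)+d(y,z)$ (no symmetry). Topology $\tau_d$: neighbourhood base at $x$ given by $\{y:d(x,y)<r\}$, $r>0$; $x_n\to x$ iff $d(x,x_n)\to0$. A sequence $(x_n)$ is right $K$-Cauchy if for every $\varepsilon>0$ there is $n_\varepsilon$ with $d(x_{n+k},x_n)<\varepsilon$ for all $n\ge n_\varepsilon$, $k\in\mathbb{N}$; $X$ is sequentially right $K$-complete if every right $K$-Cauchy sequence converges. $\varphi$ is proper if finite somewhere; nearly lower semicontinuous if $\varphi(x)\le\liminf_n\varphi(x_n)$ for every sequence with pairwise distinct terms converging to $x$. *)

(* Defs.v *)
From HB Require Import structures.
From mathcomp Require Import all_boot all_order all_algebra.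
From mathcomp Require Import all_classical all_reals all_analysis.
From mathcomp Require Import Rstruct Rstruct_topology.
Set Implicit Arguments. Unset Strict Implicit. Unset Printing Implicit Defensive.
Import Order.TTheory GRing.Theory Num.Theory.
Local Open Scope classical_set_scope.
Local Open Scope ring_scope.

Notation Rl := Rdefinitions.R.

Definition quasi_pseudometric (X : Type) (d : X -> X -> Rl) : Prop :=
  (forall x y, 0 <= d x y) /\ (forall x, d x x = 0) /\
  (forall x y z, d x z <= d x y + d y z).

Definition qconv (X : Type) (d : X -> X -> Rl) (u : nat -> X) (x : X) : Prop :=
  (fun n => d x (u n)) @ \oo --> (0 : Rl).

Definition right_K_Cauchy (X : Type) (d : X -> X -> Rl) (u : nat -> X) : Prop :=
  forall eps : Rl, 0 < eps -> exists N : nat,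
    forall n k : nat, (N <= n)%N -> (0 < k)%N -> d (u (n + k)%N) (u n) < eps.

Definition seq_right_K_complete (X : Type) (d : X -> X -> Rl) : Prop :=
  forall u : nat -> X, right_K_Cauchy d u -> exists x, qconv d u x.

(* phi : X -> R U {+oo}, modelled as \bar R; "bounded below" forces phi <> -oo *)
Definition proper_fun (X : Type) (phi : X -> \bar Rl) : Prop :=
  exists x, phi x != +oo%E.

Definition bounded_below (X : Type) (phi : X -> \bar Rl) : Prop :=
  exists c : Rl, forall x, (c%:E <= phi x)%E.

Definition nearly_lsc (X : Type) (d : X -> X -> Rl) (phi : X -> \bar Rl) : Prop :=
  forall (u : nat -> X) (x : X), injective u -> qconv d u x ->
    (phi x <= limn_einf (fun n => phi (u n)))%E.

Definition Sset (X : Type) (d : X -> X -> Rl) (phi : X -> \bar Rl) (x : X) : set X :=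
  [set y | (phi y + (d y x)%:E <= phi x)%E].

Definition admissible (X : Type) (d : X -> X -> Rl) (phi : X -> \bar Rl) : Prop :=
  proper_fun phi /\ bounded_below phi /\ nearly_lsc d phi.

Definition cond2 (X : Type) (d : X -> X -> Rl) : Prop :=
  forall phi : X -> \bar Rl, admissible d phi ->
    exists z, forall x, Sset d phi z x -> phi x = phi z.

Definition cond3 (X : Type) (d : X -> X -> Rl) : Prop :=
  forall phi : X -> \bar Rl, admissible d phi ->
    (forall x, (ereal_inf (range phi) < phi x)%E ->
       exists2 y, Sset d phi x y & (phi y < phi x)%E) ->
    exists z, forall x, (phi z <= phi x)%E.

Definition cond4 (X : Type) (d : X -> X -> Rl) : Prop :=
  forall phi : X -> \bar Rl, admissible d phi ->
    forall T : X -> X, (forall x, Sset d phi x (T x)) ->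
    exists z, phi (T z) = phi z.

(* Main.v *)
Require Import Defs.
From mathcomp Require Import all_boot all_order all_algebra.
From mathcomp Require Import all_classical all_reals all_analysis.
From mathcomp Require Import Rstruct Rstruct_topology.
From mathcomp Require Import ring lra.
Set Implicit Arguments. Unset Strict Implicit. Unset Printing Implicit Defensive.
Import Order.TTheory GRing.Theory Num.Theory.
Local Open Scope classical_set_scope.
Local Open Scope ring_scope.


Fixpoint sig (Nc G : nat -> nat) (n : nat) : nat :=
  match n with
  | 0 => Nc 0
  | n'.+1 => maxn (sig Nc G n').+1 (maxn (Nc n'.+1) (G (sig Nc G n')))
  end.

Lemma sig_Nc Nc G n : (Nc n <= sig Nc G n)%N.
Proof. by case: n => //= n; rewrite leq_max leq_maxl orbT. Qed.

Lemma sig_S Nc G n : (sig Nc G n < sig Nc G n.+1)%N.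
Proof. by rewrite /= leq_max leqnn. Qed.

Lemma sig_G Nc G n : (G (sig Nc G n) <= sig Nc G n.+1)%N.
Proof. by rewrite /= leq_max leq_max leqnn !orbT. Qed.

Lemma sig_mono Nc G m n : (m <= n)%N -> (sig Nc G m <= sig Nc G n)%N.
Proof.
elim: n => [|n IH]; first by rewrite leqn0 => /eqP ->.
rewrite leq_eqVlt => /orP[/eqP -> //|mn].
exact: (leq_trans (IH mn) (ltnW (sig_S _ _ _))).
Qed.

Lemma sig_ge Nc G n : (n <= sig Nc G n)%N.
Proof. by elim: n => // n IH; apply: leq_trans (sig_S _ _ _). Qed.

Definition e (n : nat) : Rl := (2 ^+ n)^-1.
Definition a (n : nat) : Rl := 2 * e n.

Lemma e_gt0 n : 0 < e n.
Proof. by rewrite /e invr_gt0 exprn_gt0. Qed.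

Lemma a_S n : a n.+1 = e n.
Proof.
rewrite /a /e exprS invfM mulrA mulfV ?mul1r //.
Qed.

Lemma lemC (X : Type) (v w : nat -> X) : injective v ->
  forall N, exists M, forall m, (M <= m)%N -> forall i, (i < N)%N -> w i <> v m.
Proof.
move=> vinj; elim=> [|N [M1 HM1]]; first by exists 0%N.
have [M2 HM2] : exists M2, forall m, (M2 <= m)%N -> w N <> v m.
  have [[m0 hm0]|nm] := pselect (exists m0, v m0 = w N).
    exists m0.+1 => m hm wv; have := vinj _ _ (etrans hm0 wv).
    by move=> eq; rewrite eq ltnn in hm.
  by exists 0%N => m _ wv; apply: nm; exists m.
exists (maxn M1 M2) => m; rewrite geq_max => /andP[h1 h2] i.
rewrite ltnS leq_eqVlt => /orP[/eqP ->|iN]; first exact: HM2.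
exact: HM1.
Qed.

Section K2.
Variables (X : Type) (d : X -> X -> Rl).
Hypothesis qpm : quasi_pseudometric d.

Lemma d_ge0 x y : 0 <= d x y. Proof. by case: qpm. Qed.
Lemma d_xx x : d x x = 0. Proof. by case: qpm => _ []. Qed.
Lemma d_tri x y z : d x z <= d x y + d y z. Proof. by case: qpm => _ []. Qed.

Lemma qconvP u x : qconv d u x <->
  (forall eps, 0 < eps -> exists N, forall n, (N <= n)%N -> d x (u n) < eps).
Proof.
rewrite /qconv; split.
  move=> /(@cvgrPdist_lt Rl (GRing.regular Rl)) H eps e0.
  have [N _ HN] := H eps e0; exists N => n Nn.
  by have := HN n Nn; rewrite /= sub0r normrN ger0_norm ?d_ge0.
move=> H; apply/(@cvgrPdist_lt Rl (GRing.regular Rl)) => eps e0.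
have [N HN] := H eps e0; exists N => // n /= Nn.
by rewrite sub0r normrN ger0_norm ?d_ge0 //; apply: HN.
Qed.

Lemma clusterP u x : right_K_Cauchy d u ->
  (forall N eps, 0 < eps -> exists2 n, (N <= n)%N & d x (u n) < eps) ->
  qconv d u x.
Proof.
move=> uC hc; apply/qconvP => eps e0.
have e20 : 0 < eps / 2 by rewrite divr_gt0.
have [N HN] := uC _ e20.
exists N => p Np.
have [n pn hn] := hc p _ e20.
have [k nk] : exists k, n = (p + k)%N by exists (n - p)%N; rewrite subnKC.
rewrite nk in hn; clear nk pn; case: k => [|k] in hn *.
  by rewrite addn0 in hn; apply: lt_trans hn _; rewrite ltr_pdivrMr // ltr_pMr // ltr1n.
apply: le_lt_trans (d_tri _ (u (p + k.+1)%N) _) _.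
rewrite [eps](splitr eps) ltrD //; exact: HN.
Qed.

Lemma nocluster u x : right_K_Cauchy d u -> ~ qconv d u x ->
  exists N, forall n, (N <= n)%N -> u n <> x.
Proof.
move=> uC nq; apply: contrapT => H; apply: nq; apply: clusterP => // N eps e0.
apply: contrapT => H'; apply: H; exists N => n Nn un; apply: H'.
by exists n => //; rewrite un d_xx.
Qed.

Lemma lemB (u : nat -> X) : (forall y, exists N, forall n, (N <= n)%N -> u n <> y) ->
  forall j, exists M, forall p, (M <= p)%N -> forall i, (i <= j)%N -> u p <> u i.
Proof.
move=> hy; elim=> [|j [M1 HM1]].
  have [M HM] := hy (u 0%N); exists M => p Mp i; rewrite leqn0 => /eqP ->.
  exact: HM.
have [M2 HM2] := hy (u j.+1).
exists (maxn M1 M2) => p; rewrite geq_max => /andP[h1 h2] i.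
rewrite leq_eqVlt => /orP[/eqP ->|ij]; first exact: HM2.
exact: HM1.
Qed.

Lemma einf_le_liminf (u : (\bar Rl)^nat) n : (einfs u n <= limn_einf u)%E.
Proof.
rewrite limn_einf_lim (cvg_lim _ (@cvg_einfs_sup _ u)) //.
by apply: ereal_sup_ubound; exists n.
Qed.

Lemma key2 :
  ~ seq_right_K_complete d ->
  exists phi : X -> \bar Rl, admissible d phi /\
    forall y, exists t, Sset d phi y t /\ (phi t < phi y)%E.
Proof.
move=> nc.
have [u [uC unc]] : exists u, right_K_Cauchy d u /\ forall x, ~ qconv d u x.
  apply: contrapT => H; apply: nc => u uC; apply: contrapT => H2; apply: H.
  by exists u; split => // x qx; apply: H2; exists x.
have [Nc HNc] : {Nc : nat -> nat & forall n p k, (Nc n <= p)%N -> (0 < k)%N ->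
    d (u (p + k)%N) (u p) < e n}.
  apply: (@choice _ _ (fun n N => forall p k, (N <= p)%N -> (0 < k)%N ->
    d (u (p + k)%N) (u p) < e n)) => n; have [N HN] := uC _ (e_gt0 n).
  by exists N => p k Np k0; apply: HN.
have [G HG] : {G : nat -> nat & forall j p, (G j <= p)%N ->
    forall i, (i <= j)%N -> u p <> u i}.
  apply: (@choice _ _ (fun j M => forall p, (M <= p)%N ->
    forall i, (i <= j)%N -> u p <> u i)); apply: lemB => y; exact: nocluster.
pose w n := u (sig Nc G n).
have w_inj : injective w.
  have H : forall m n, (m < n)%N -> w n <> w m.
    move=> m [//|n] mn; apply: (HG (sig Nc G n)); first exact: sig_G.
    by apply: sig_mono.
  move=> m n; case: (ltngtP m n) => // mn wmn.
    by case: (H _ _ mn).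
  by case: (H _ _ mn).
have w_step n : d (w n.+1) (w n) < e n.
  rewrite /w; have /subnKC <- := ltnW (sig_S Nc G n).
  apply: HNc; first exact: sig_Nc.
  by rewrite subn_gt0 sig_S.
pose phi y := ereal_inf [set (a n)%:E | n in [set n | w n = y]].
have phi_w n : phi (w n) = (a n)%:E.
  rewrite /phi (_ : [set _ | _ in _] = [set (a n)%:E]) ?ereal_inf1 //.
  apply/seteqP; split => [_ [m /= /w_inj -> <-] //|_ ->]; by exists n.
have phi_out y : (forall n, w n <> y) -> phi y = +oo%E.
  move=> hy; rewrite /phi (_ : [set _ | _ in _] = set0) ?ereal_inf0 //.
  by apply/seteqP; split => // _ [m /= wm _]; case: (hy m).
exists phi; split; [split; [|split]|].
- by exists (w 0%N); rewrite phi_w.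
- exists 0 => y; apply: le_ereal_inf_tmp => _ [m _ <-].
  by rewrite lee_fin /a mulr_ge0 // ltW // e_gt0.
- move=> v x vinj vx.
  have [[M HM]|H] := pselect (exists M, forall m, (M <= m)%N -> forall n, w n <> v m).
    apply: le_trans (leey _) _; apply: le_trans (einf_le_liminf _ M).
    apply: le_ereal_inf_tmp => _ [k /= Mk <-].
    by rewrite /= phi_out //; exact: HM.
  exfalso; apply: (unc x); apply: clusterP => // N eps e0.
  have [M1 HM1] := (qconvP v x).1 vx eps e0.
  have [M2 HM2] := lemC w vinj N.
  apply: contrapT => Hne; apply: H; exists (maxn M1 M2) => m.
  rewrite geq_max => /andP[h1 h2] n wn.
  have Nn : (N <= n)%N.
    by rewrite leqNgt; apply/negP => nN; exact: (HM2 m h2 n nN wn).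
  apply: Hne; exists (sig Nc G n); first exact: leq_trans Nn (sig_ge _ _ _).
  by have := HM1 m h1; rewrite -wn.
- move=> y; have [[n <-]|ny] := pselect (exists n, w n = y).
    exists (w n.+1); rewrite /Sset /= !phi_w; split.
      by rewrite -EFinD lee_fin a_S /a ltW // mulr2n mulrDl mul1r ltrD2l w_step.
    by rewrite lte_fin a_S /a ltr_pMl ?e_gt0 // ltr1n.
  have py : phi y = +oo%E by apply: phi_out => n wn; apply: ny; exists n.
  exists (w 0%N); rewrite /Sset /= py phi_w; split; first exact: leey.
  exact: ltey.
Qed.
Lemma limn_einf_le (v : (\bar Rl)^nat) m :
  (forall k, (m <= k)%N -> (v k <= v m)%E) -> (limn_einf v <= v m)%E.
Proof.
move=> H; rewrite limn_einf_lim (cvg_lim _ (@cvg_einfs_sup _ v)) //.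
apply: ge_ereal_sup => _ [n _ <-].
apply: le_trans (H (maxn n m) (leq_maxr _ _)).
by apply: ereal_inf_lbound; exists (maxn n m) => //=; exact: leq_maxl.
Qed.

Lemma key1 : seq_right_K_complete d -> cond2 d.
Proof.
move=> C phi [[x0 hx0] [[c hc] lsc]].
apply: contrapT => Hn0.
have Hn z : exists2 x, Sset d phi z x & phi x <> phi z.
  apply: contrapT => H; apply: Hn0; exists z => x sx.
  by apply: contrapT => ne; apply: H; exists x.
pose fin x := phi x != +oo%E.
pose F x := fine (phi x).
have phiF x : fin x -> phi x = (F x)%:E.
  rewrite /fin /F; move: (hc x); case: (phi x) => [r| |] //=.
have Fc x : fin x -> c <= F x.
  by move=> fx; have := hc x; rewrite phiF // lee_fin.
have Sfin x y : fin x -> Sset d phi x y -> fin y /\ F y + d y x <= F x.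
  move=> fx sxy; move: sxy (hc y); rewrite /Sset (phiF x fx) /fin /F.
  case Ey: (phi y) => [r| |] //= h hcy; rewrite ?Ey in h.
  - by split => //; rewrite -lee_fin EFinD.
  - by move: h; rewrite leye_eq.
have finS x y : fin x -> fin y -> F y + d y x <= F x -> Sset d phi x y.
  by move=> fx fy h; rewrite /Sset /= !phiF // -EFinD lee_fin.
have Srefl x : fin x -> Sset d phi x x.
  by move=> fx; apply: finS => //; rewrite d_xx addr0.
have Strans x y z : fin x -> Sset d phi x y -> Sset d phi y z -> Sset d phi x z.
  move=> fx sxy syz; have [fy hxy] := Sfin _ _ fx sxy.
  have [fz hyz] := Sfin _ _ fy syz.
  apply: finS => //; have := d_tri z y x; lra.
pose A x := [set F y | y in Sset d phi x].
have Ainf x : fin x -> has_inf (A x).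
  move=> fx; split; first by exists (F x); exists x => //; exact: Srefl.
  by exists c => _ [y sy <-]; apply: Fc; exact: (Sfin _ _ fx sy).1.
pose m x := inf (A x).
have m_le x y : fin x -> Sset d phi x y -> m x <= F y.
  by move=> fx sy; apply: ge_inf; [exact: (Ainf x fx).2| exists y].
have m_mono x y : fin x -> Sset d phi x y -> m x <= m y.
  move=> fx sy; have fy := (Sfin _ _ fx sy).1.
  apply: lb_le_inf; first exact: (Ainf y fy).1.
  by move=> _ [w sw <-]; apply: m_le => //; exact: Strans sw.
have step x : exists y, fin x -> Sset d phi x y /\ F y < (F x + m x) / 2.
  have [fx|nfx] := pselect (fin x); last by exists x.
  have [y0 sy0 ne] := Hn x; have [fy0 hy0] := Sfin x y0 fx sy0.
  have Fne : F y0 != F x.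
    by apply/eqP => eq; apply: ne; rewrite !phiF // eq.
  have Fy0 : F y0 < F x.
    rewrite lt_neqAle Fne /=; have := d_ge0 y0 x; lra.
  have mlt : m x < F x := le_lt_trans (m_le _ _ fx sy0) Fy0.
  have e0 : 0 < (F x - m x) / 2 by rewrite divr_gt0 // subr_gt0.
  have [_ [y sy <-] hr] := inf_adherent e0 (Ainf x fx).
  exists y => _; split => //; move: hr; rewrite -/(m x); lra.
have [st hst] := choice step.
pose u n := iter n st x0.
have u_fin n : fin (u n).
  elim: n => [|n IH] //=; exact: (Sfin _ _ IH (hst _ IH).1).1.
have u_S n : Sset d phi (u n) (u n.+1) by exact: (hst _ (u_fin n)).1.
have u_lt n : F (u n.+1) < (F (u n) + m (u n)) / 2 by exact: (hst _ (u_fin n)).2.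
have u_Sk n k : Sset d phi (u n) (u (n + k)%N).
  elim: k => [|k IH]; first by rewrite addn0; exact: Srefl.
  by rewrite addnS; apply: Strans IH _ => //; exact: u_S.
pose g n := F (u n) - m (u n).
have g_ge0 n : 0 <= g n.
  by rewrite subr_ge0; apply: m_le => //; exact: Srefl.
have g_half n : g n.+1 <= g n / 2.
  have := m_mono _ _ (u_fin n) (u_S n); have := u_lt n; rewrite /g; lra.
have g_mono i j : (i <= j)%N -> g j <= g i.
  elim: j => [|j IH]; first by rewrite leqn0 => /eqP ->.
  rewrite leq_eqVlt => /orP[/eqP -> //|ij].
  have := IH ij; have := g_half j; have := g_ge0 j; lra.
have g_pow n : g n * 2 ^+ n <= g 0%N.
  elim: n => [|n IH]; first by rewrite expr0 mulr1.
  apply: le_trans IH; rewrite exprS mulrA ler_wpM2r ?exprn_ge0 //.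
  have := g_half n; lra.
have g_small eps : 0 < eps -> exists n, g n < eps.
  move=> e0; apply: contrapT => H.
  have H' n : eps <= g n by rewrite leNgt; apply/negP => h; apply: H; exists n.
  have [n hb] : exists n : nat, g 0%N / eps < n%:R.
    by exists (Num.bound (g 0%N / eps)); apply: archi_boundP; rewrite divr_ge0 // ltW.
  have h2 : (n%:R : Rl) <= 2 ^+ n.
    by rewrite -natrX ler_nat; apply: ltnW; apply: ltn_expl.
  have : eps * 2 ^+ n <= g 0%N.
    by apply: le_trans (g_pow n); rewrite ler_wpM2r ?exprn_ge0.
  have : g 0%N < eps * n%:R by rewrite -ltr_pdivrMl // mulrC.
  move=> h3 h4; have : eps * n%:R <= eps * 2 ^+ n by rewrite ler_wpM2l // ltW.
  lra.
have u_d n k : d (u (n + k)%N) (u n) <= g n.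
  have [_ h] := Sfin _ _ (u_fin n) (u_Sk n k).
  have := m_le _ _ (u_fin n) (u_Sk n k); rewrite /g; lra.
have u_F n k : F (u (n + k)%N) <= F (u n).
  have [_ h] := Sfin _ _ (u_fin n) (u_Sk n k); have := d_ge0 (u (n + k)%N) (u n); lra.
have u_decr n k : F (u (n + k.+1)%N) < F (u n).
  rewrite -addSnnS; apply: le_lt_trans (u_F _ _) _.
  have := u_lt n; have := m_le _ _ (u_fin n) (Srefl _ (u_fin n)); lra.
have u_inj : injective u.
  have H i j : (i < j)%N -> u i <> u j.
    move=> ij eq; have := u_decr i (j - i.+1)%N.
    by rewrite addnS -addSn subnKC // eq ltxx.
  move=> i j; case: (ltngtP i j) => // ij eq.
    by case: (H _ _ ij).
  by case: (H _ _ ij).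
have uC : right_K_Cauchy d u.
  move=> eps e0; have [N hN] := g_small _ e0; exists N => n k Nn _.
  exact: le_lt_trans (u_d n k) (le_lt_trans (g_mono _ _ Nn) hN).
have [z qz] := C u uC.
have lim_le k : (phi z <= phi (u k))%E.
  apply: le_trans (lsc u z u_inj qz) _; apply: (@limn_einf_le (fun n => phi (u n)) k) => j kj.
  rewrite -(subnKC kj) !phiF ?u_fin // lee_fin; exact: u_F.
have fz : fin z.
  rewrite /fin; apply: contraTneq (lim_le 0%N) => ->.
  by rewrite phiF ?u_fin // leNgt ltey.
have Fz k : F z <= F (u k) by have := lim_le k; rewrite !phiF ?u_fin // lee_fin.
have zS n : Sset d phi (u n) z.
  apply: finS; [exact: u_fin | exact: fz | ].
  apply/ler_addgt0Pr => eps e0.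
  have [N hN] := (qconvP u z).1 qz eps e0.
  have h1 := hN (n + N)%N (leq_addl _ _).
  have [_ h2] := Sfin _ _ (u_fin n) (u_Sk n N).
  have := d_tri z (u (n + N)%N) (u n); have := Fz (n + N)%N; lra.
have [y sy ne] := Hn z; have [fy hy] := Sfin z y fz sy.
have Fne : F y != F z by apply/eqP => eq; apply: ne; rewrite !phiF // eq.
have Fyz : F y < F z by rewrite lt_neqAle Fne /=; have := d_ge0 y z; lra.
have yS n : Sset d phi (u n) y := Strans _ _ _ (u_fin n) (zS n) sy.
have [n hn] : exists n, g n < F z - F y by apply: g_small; rewrite subr_gt0.
have := Fz n.+1; have := u_lt n; have := m_le _ _ (u_fin n) (yS n).
have := g_ge0 n; move: hn; rewrite /g; lra.
Qed.
End K2.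

Theorem theorem3p9 (X : Type) (d : X -> X -> Rl) :
  quasi_pseudometric d ->
  (seq_right_K_complete d <-> cond2 d) /\
  (seq_right_K_complete d <-> cond3 d) /\
  (seq_right_K_complete d <-> cond4 d).
Proof.
move=> qpm; split; [split|split; [split|split]].
- exact: (key1 qpm).
- move=> H2; apply: contrapT => nc; have [phi [adm hs]] := key2 qpm nc.
  have [z hz] := H2 phi adm; have [t [st lt]] := hs z.
  by move: lt; rewrite (hz t st) ltxx.
- move=> c phi adm hyp; have [z hz] := key1 qpm c adm; exists z => x.
  have [h|h] := leP (phi z) (ereal_inf (range phi)).
    by apply: (le_trans h); apply: ereal_inf_lbound; exists x.
  have [y sy lt] := hyp z h.
  by move: lt; rewrite (hz y sy) ltxx.
- move=> H3; apply: contrapT => nc; have [phi [adm hs]] := key2 qpm nc.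
  have [z hz] : exists z, forall x, (phi z <= phi x)%E.
    apply: H3 => // x _; have [t [st lt]] := hs x; by exists t.
  have [t [st lt]] := hs z.
  by move: lt; rewrite ltNge hz.
- move=> c phi adm T hT; have [z hz] := key1 qpm c adm; exists z.
  exact: hz.
- move=> H4; apply: contrapT => nc; have [phi [adm hs]] := key2 qpm nc.
  have [T hT] := choice hs.
  have [z hz] := H4 phi adm T (fun x => (hT x).1).
  by move: (hT z).2; rewrite hz ltxx.
Qed.
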